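(* Let $\Sigma$ be a finite alphabet, let $T = T_1\cdots T_n$ (the text) and $P = P_1\cdots P_m$ (the pattern) be strings over $\Sigma$, and let $P^G$ be the $\mathcal P$-graph of $P$ (defined in the context). Then for every $i \in [1..n]$, $P$ swap matches $T$ at location $i$ if and only if $P^G$ matches $T$ at position $i$.
   Context: A swap permutation for a string $X = X_1\cdots X_m$ is a permutation $\pi$ of $\{1,\ldots,m\}$ such that (1) if $\pi(i)=j$ then $\pi(j)=i$; (2) $\pi(i)\in\{i-1,i,i+1\}$ for all $i$; (3) if $\pi(i)\neq i$ then $X_{\pi(i)}\neq X_i$. The swapped version is $\pi(X) = X_{\pi(1)}X_{\pi(2)}\cdots X_{\pi(m)}$. $P$ swap matches $T$ at location $i$ (identified by the end position of the match) if there is a swapped version $P'$ of $P$ with $P'_j = T_{i-m+j}$ for all $j\in[1..m]$ (in particular this requires $i\ge m$, so that all these text positions exist). The $\mathcal P$-graph $P^G=(V^P,E^P)$ of $P$ is the directed graph whose vertices are entries of a $3\times m$ array $M$ with rows indexed $-1,0,+1$: the vertices are $M[-1,i]$ for $2\le i\le m$ with label $P_{i-1}$; $M[0,i]$ for $1\le i\le m$ with label $P_i$; and $M[+1,i]$ for $1\le i\le m-1$ with label $P_{i+1}$. The edges are: $(M[-1,i],M[0,i+1])$ for $2\le i\le m-1$; $(M[-1,i],M[+1,i+1])$ for $2\le i\le m-2$; $(M[0,i],M[0,i+1])$ for $1\le i\le m-1$; $(M[0,i],M[+1,i+1])$ for $1\le i\le m-2$; and $(M[+1,i],M[-1,i+1])$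 for $1\le i\le m-1$. $P^G$ matches $T$ at position $i\in[1..n]$ if there is a directed path $u_1u_2\cdots u_m$ in $P^G$ (consecutive vertices joined by edges) with $u_1\in\{M[0,1],M[+1,1]\}$, $u_m\in\{M[-1,m],M[0,m]\}$, and $\mathrm{label}(u_j)=T_{i-m+j}$ for all $j\in[1..m]$ (again requiring all these text positions to exist). *)

(* Defs.v *)
(* Strings are sequences over a finite alphabet S : finType.
   Positions are 1-based as in the paper. *)
From mathcomp Require Import all_boot all_fingroup.
Set Implicit Arguments. Unset Strict Implicit. Unset Printing Implicit Defensive.

Section Defs.
Variable S : finType.

Definition at_ (X : seq S) (k : nat) : option S := nth None (map Some X) k.-1.

(* Swap permutation of X = X_1..X_m; the element j : 'I_m stands for position j+1. *)
Definition swap_perm (X : seq S) (pi : {perm 'I_(size X)}) : Prop :=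
  [/\ (forall i, pi (pi i) = i),
      (forall i, (val (pi i)).+1 = val i \/ val (pi i) = val i \/ val (pi i) = (val i).+1)
    & (forall i, pi i <> i -> at_ X (val (pi i)).+1 <> at_ X (val i).+1)].

(* P swap matches T at location i (end position): some swapped version
   P' = P_{pi(1)} .. P_{pi(m)} satisfies P'_j = T_{i-m+j} for j in [1..m]. *)
Definition swap_match (P T : seq S) (i : nat) : Prop :=
  size P <= i /\
  exists pi : {perm 'I_(size P)}, swap_perm pi /\
    forall j : 'I_(size P), at_ P (val (pi j)).+1 = at_ T (i - size P + (val j).+1).

Inductive row := Rm | R0 | Rp.
Definition vertex : Type := (row * nat)%type.

Definition in_V (P : seq S) (v : vertex) : bool :=
  let m := size P in
  match v with
  | (Rm, i) => (2 <= i) && (i <= m)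
  | (R0, i) => (1 <= i) && (i <= m)
  | (Rp, i) => (1 <= i) && (i <= m - 1)
  end.

Definition label (P : seq S) (v : vertex) : option S :=
  match v with
  | (Rm, i) => at_ P i.-1
  | (R0, i) => at_ P i
  | (Rp, i) => at_ P i.+1
  end.

Definition edge (P : seq S) (u v : vertex) : bool :=
  let m := size P in
  match u, v with
  | (Rm, i), (R0, i') => (i' == i.+1) && (2 <= i) && (i <= m - 1)
  | (Rm, i), (Rp, i') => (i' == i.+1) && (2 <= i) && (i <= m - 2)
  | (R0, i), (R0, i') => (i' == i.+1) && (1 <= i) && (i <= m - 1)
  | (R0, i), (Rp, i') => (i' == i.+1) && (1 <= i) && (i <= m - 2)
  | (Rp, i), (Rm, i') => (i' == i.+1) && (1 <= i) && (i <= m - 1)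
  | _, _ => false
  end.

Definition graph_match (P T : seq S) (i : nat) : Prop :=
  let m := size P in
  m <= i /\
  exists u : nat -> vertex,
    [/\ (forall j, 1 <= j <= m -> in_V P (u j)),
        (forall j, 1 <= j < m -> edge P (u j) (u j.+1)),
        (u 1 = (R0, 1) \/ u 1 = (Rp, 1)),
        (u m = (Rm, m) \/ u m = (R0, m))
      & (forall j, 1 <= j <= m -> label P (u j) = at_ T (i - m + j))].

End Defs.

(* Main.v *)
Require Import Defs.
From mathcomp Require Import all_boot all_fingroup.
From mathcomp Require Import zify.
Set Implicit Arguments. Unset Strict Implicit.

Section H.
Variable S : finType.
Implicit Types P T : seq S.

Definition hprop P T i (h : nat -> nat) :=
  forall k, k < size P -> [/\ h k < size P, h (h k) = k,
     (h k = k.-1 /\ 0 < k) \/ h k = k \/ h k = k.+1,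
     (h k <> k -> at_ P (h k).+1 <> at_ P k.+1)
   & at_ P (h k).+1 = at_ T (i - size P + k.+1)].

Lemma swap_of_h P T i h : size P <= i -> hprop P T i h -> swap_match P T i.
Proof.
move=> Hi H; split => //.
pose f : 'I_(size P) -> 'I_(size P) := fun o => insubd o (h o).
have fv o : val (f o) = h o.
  by rewrite val_insubd; case: (H o (ltn_ord o)) => ->.
have ff : cancel f f.
  by move=> o; apply: val_inj; rewrite !fv; case: (H o (ltn_ord o)).
exists (perm (can_inj ff)); split.
- split.
  + by move=> o; rewrite !permE.
  + move=> [o lo]; rewrite permE fv /=; case: (H o lo) => _ _ [[-> ?]|[->|->]] _ _; lia.
  + move=> o; rewrite permE fv => ne; case: (H o (ltn_ord o)) => _ _ _ + _; apply.
    by move=> e; apply: ne; apply: val_inj; rewrite fv.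
- by move=> o; rewrite permE fv; case: (H o (ltn_ord o)).
Qed.

Lemma h_of_swap P T i : swap_match P T i ->
  exists h, [/\ size P <= i,
   (forall k, k < size P -> [/\ h k < size P, h (h k) = k &
     (h k = k.-1 /\ 0 < k) \/ h k = k \/ h k = k.+1])
   & forall k, k < size P -> at_ P (h k).+1 = at_ T (i - size P + k.+1)].
Proof.
move=> [Hi [pi [[inv disp _] M]]].
pose h k := if insub k is Some o then val (pi o) else k.
have hE (o : 'I_(size P)) : h (val o) = val (pi o).
  by rewrite /h valK.
exists h; split => // k lk; have := hE (Ordinal lk) => /= E.
  rewrite E; split.
  - exact: ltn_ord.
  - by rewrite hE inv.
  - have := disp (Ordinal lk) => /=; lia.
by rewrite E (M (Ordinal lk)).
Qed.
End H.

Section G.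
Variable S : finType.
Implicit Types P T : seq S.

Definition allowed r r' := match r, r' with
  | Rm, R0 | Rm, Rp | R0, R0 | R0, Rp | Rp, Rm => true | _, _ => false end.

Lemma edgeI P r r' j : allowed r r' -> in_V P (r,j) -> in_V P (r',j.+1) ->
  edge P (r,j) (r',j.+1).
Proof.
case: r; case: r' => //= _; rewrite eqxx /= => *; lia.
Qed.

Lemma edgeE P a b : edge P a b -> b.2 = a.2.+1 /\ allowed a.1 b.1.
Proof.
by case: a b => [[] j] [[] j'] //= /andP[/andP[/eqP-> _] _].
Qed.

Definition rowof (a b : nat) := if a < b then Rm else if a == b then R0 else Rp.
Lemma rowofL a b : a < b -> rowof a b = Rm. Proof. by rewrite /rowof => ->. Qed.
Lemma rowofE a : rowof a a = R0. Proof. by rewrite /rowof ltnn eqxx. Qed.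
Lemma rowofG a b : b < a -> rowof a b = Rp.
Proof. by move=> H; rewrite /rowof ltnNge (ltnW H) /= gtn_eqF. Qed.

Lemma fwd P T i : 0 < size P -> swap_match P T i -> graph_match P T i.
Proof.
move=> m0 /h_of_swap [h [Hi Hh HM]].
set m := size P in m0 Hi Hh HM *.
pose u j := (rowof (h j.-1) j.-1, j).
have key k : k < m -> [/\ h k < m, h (h k) = k &
   (h k = k.-1 /\ 0 < k /\ u k.+1 = (Rm, k.+1)) \/ (h k = k /\ u k.+1 = (R0, k.+1))
   \/ (h k = k.+1 /\ u k.+1 = (Rp, k.+1))].
  move=> lk; rewrite /u /=; case: (Hh k lk) => H1 H2 [[E p]|[E|E]]; split => //; rewrite E.
  - left; split => //; split => //; rewrite rowofL //; lia.
  - by right; left; rewrite rowofE.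
  - right; right; split => //; rewrite rowofG //.
have inV j : 1 <= j <= m -> in_V P (u j).
  case: j => [|k] // /andP[_ lk].
  case: (key k lk) => H1 _ [[E [p ->]]|[[E ->]|[E ->]]] /=; rewrite -/m; lia.
split => //; exists u; split => //.
- move=> j /andP[]; case: j => [|k] // _ lk.
  have := inV k.+1; have := inV k.+2.
  case: (key k (ltnW lk)) => _ Ik [[E [p ->]]|[[E ->]|[E ->]]];
  case: (key k.+1 lk) => _ Ik1 [[E1 [p1 ->]]|[[E1 ->]|[E1 ->]]] => I2 I1;
  apply: edgeI; rewrite ?I1 ?I2 //; try lia;
  rewrite E in Ik; rewrite E1 /= in Ik1; lia.
- case: (key 0 m0) => _ _ [[E [p ->]]|[[E ->]|[E ->]]]; [lia|by left|by right].
- move: m0; rewrite /m; case E: (size P) => [|m'] // _.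
  have lm : m' < m by rewrite /m E.
  case: (key m' lm) => H1 _ [[E1 [p ->]]|[[E1 ->]|[E1 ->]]]; [by left|by right|].
  rewrite /m E in H1; lia.
- move=> j /andP[]; case: j => [|k] // _ lk.
  rewrite -HM //.
  case: (key k lk) => _ _ [[E [p ->]]|[[E ->]|[E ->]]] //=; rewrite E // prednK.
Qed.
End G.

Section B.
Variable S : finType.
Implicit Types P T : seq S.

Definition sh rr k := match rr with Rm => k.-1 | R0 => k | Rp => k.+1 end.

Lemma bwd P T i : 0 < size P -> graph_match P T i -> swap_match P T i.
Proof.
move=> m0 [Hi [u [IV ED U1 Um LB]]].
set m := size P in m0 Hi IV ED Um LB *.
have col j : 1 <= j <= m -> (u j).2 = j.
  elim: j => [|j IH] // /andP[_ lj]; case: j IH lj => [|j] IH lj.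
    by case: U1 => ->.
  have /edgeE [-> _] : edge P (u j.+1) (u j.+2) by apply: ED; lia.
  rewrite IH //; lia.
pose r j := (u j).1.
have uE j : 1 <= j <= m -> u j = (r j, j).
  by move=> H; rewrite /r -{3}(col j H); case: (u j).
have tr j : 1 <= j < m -> allowed (r j) (r j.+1).
  move=> H; have := edgeE (ED j H); rewrite /r; tauto.
pose h k := if at_ P (sh (r k.+1) k).+1 == at_ P k.+1 then k else sh (r k.+1) k.
apply: (swap_of_h (h := h)) => // k lk.
have IVk : in_V P (r k.+1, k.+1) by rewrite -uE; [apply: IV|]; lia.
have LBk : label P (r k.+1, k.+1) = at_ T (i - m + k.+1) by rewrite -uE; [apply: LB|]; lia.
case Hr: (r k.+1) IVk LBk => /= IVk LBk.
-
  case: k lk Hr IVk LBk => [|k] lk Hr IVk LBk; first by lia.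
  have Hr0 : r k.+1 = Rp.
    have := tr k.+1; rewrite Hr; case: (r k.+1) => //; move=> H; have := H ltac:(lia); done.
  have hk : h k.+1 = if at_ P k.+1 == at_ P k.+2 then k.+1 else k by rewrite /h Hr.
  have hk' : h k = if at_ P k.+2 == at_ P k.+1 then k else k.+1 by rewrite /h Hr0.
  rewrite hk; case: eqP => E.
    split; [lia| by rewrite hk ifT //; apply/eqP|lia|by move=> /(_ erefl)|by rewrite -E].
  split; [lia| by rewrite hk' eq_sym; case: eqP|lia|by move=> _|by []].
-
  have hk : h k = k by rewrite /h Hr /=; case: ifP.
  by rewrite hk; split => //; lia.
-
  have Hr2 : r k.+2 = Rm.
    have := tr k.+1; rewrite Hr; case: (r k.+2) => //; move=> H; have := H ltac:(lia); done.
  have hk : h k = if at_ P k.+2 == at_ P k.+1 then k else k.+1 by rewrite /h Hr.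
  have hk' : h k.+1 = if at_ P k.+1 == at_ P k.+2 then k.+1 else k by rewrite /h Hr2.
  rewrite hk; case: eqP => E.
    split; [lia| by rewrite hk ifT //; apply/eqP|lia|by move=> /(_ erefl)|by rewrite -E].
  split; [lia| by rewrite hk' eq_sym; case: eqP|lia|by move=> _|by []].
Qed.
End B.

Theorem lemma1 (S : finType) (T P : seq S) (i : nat) :
  0 < size P -> 1 <= i <= size T ->
  swap_match P T i <-> graph_match P T i.
Proof.
move=> m0 _; split; [exact: fwd | exact: bwd].
Qed.
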